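(* Let $m\ge 2$, $n=2m$, let $t$ be an integer with $1\le t\le m-1$ such that $m/\gcd(m,t)$ is odd, and let $\gamma(X_0,\ldots,X_{m-1})\in\mathbb{F}_2[X_0,\ldots,X_{m-1}]$ be a reduced polynomial. Define $f_t:\mathbb{F}_2^n\to\mathbb{F}_2$ by $$f_t(x)=\sum_{i=0}^{n-1}\left(x_ix_{i+t}x_{i+m}+x_ix_{i+t}\right)+\sum_{i=0}^{m-1}x_ix_{i+m}+\gamma(x_0+x_m,\,x_1+x_{m+1},\,\ldots,\,x_{m-1}+x_{2m-1}),$$ where indices of $x$ are taken modulo $n$. Then $f_t$ is a bent function. Moreover, if $\gamma$ is rotation symmetric (i.e. $\gamma(X_0,X_1,\ldots,X_{m-1})=\gamma(X_1,\ldots,X_{m-1},X_0)$) of algebraic degree $d\ge 3$, then $f_t$ is a rotation symmetric bent function of algebraic degree $d$.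
   Context: Every Boolean function $f:\mathbb{F}_2^n\to\mathbb{F}_2$ is identified with its algebraic normal form, a reduced polynomial $\sum_{u\in\mathbb{F}_2^n}c_u\prod_{i=0}^{n-1}x_i^{u_i}$ with $c_u\in\mathbb{F}_2$ (each variable appears with exponent at most 1); its algebraic degree is the largest number of variables in a monomial with nonzero coefficient. $f$ is rotation symmetric if $f(x_1,x_2,\ldots,x_{n-1},x_0)=f(x_0,x_1,\ldots,x_{n-1})$ for all $x\in\mathbb{F}_2^n$. The Walsh transform is $\mathcal{W}_f(b)=\sum_{x\in\mathbb{F}_2^n}(-1)^{f(x)+\sum_i x_ib_i}$, and $f$ is bent if $\mathcal{W}_f(b)=\pm 2^{n/2}$ for all $b\in\mathbb{F}_2^n$. *)

(* Defs.v *)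
From mathcomp Require Import all_boot all_order all_algebra.
Set Implicit Arguments. Unset Strict Implicit. Unset Printing Implicit Defensive.
Import GRing.Theory Num.Theory.

Notation vec n := {ffun 'I_n -> bool}.

Definition xat (n : nat) (x : vec n) (k : nat) : bool :=
  [exists i : 'I_n, (val i == k %% n) && x i].

(* A reduced polynomial (ANF) in n variables over F_2:
   its coefficient family (c_u)_{u in F_2^n}; the monomial for u is prod_{u_i = 1} x_i. *)
Notation anf n := {ffun vec n -> bool}.

Definition anf_eval (n : nat) (c : anf n) (x : vec n) : bool :=
  \big[addb/false]_(u : vec n) (c u && [forall i, u i ==> x i]).

Definition wt (n : nat) (u : vec n) : nat := #|[set i | u i]|.

Definition anf_deg (n : nat) (c : anf n) : nat := \max_(u | c u) wt u.

(* f has algebraic degree d: the (unique) reduced polynomial representing f has degree d *)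
Definition has_alg_degree (n : nat) (f : vec n -> bool) (d : nat) : Prop :=
  exists c : anf n, (forall x, anf_eval c x = f x) /\ anf_deg c = d.

Definition rot (n : nat) (x : vec n) : vec n := [ffun i : 'I_n => xat x (i + 1)].

Definition rotation_symmetric (n : nat) (f : vec n -> bool) : Prop :=
  forall x, f (rot x) = f x.

Definition dotb (n : nat) (x b : vec n) : bool := \big[addb/false]_(i < n) (x i && b i).

Definition walsh (n : nat) (f : vec n -> bool) (b : vec n) : int :=
  (\sum_(x : vec n) (-1) ^+ (f x (+) dotb x b))%R.

Definition bent (n : nat) (f : vec n -> bool) : Prop :=
  forall b, walsh f b = Posz (2 ^ n./2) \/ walsh f b = (- Posz (2 ^ n./2))%R.

Definition f_t (m t : nat) (gamma : anf m) (x : vec (m.*2)) : bool :=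
  (\big[addb/false]_(i < m.*2)
      ((xat x i && xat x (i + t) && xat x (i + m)) (+) (xat x i && xat x (i + t))))
  (+) (\big[addb/false]_(i < m) (xat x i && xat x (i + m)))
  (+) anf_eval gamma [ffun j : 'I_m => xat x j (+) xat x (j + m)].

(* Main.v *)
Require Import Defs.
From mathcomp Require Import all_boot all_order all_algebra.
From mathcomp Require Import zify.
Set Implicit Arguments. Unset Strict Implicit. Unset Printing Implicit Defensive.
Import GRing.Theory Num.Theory.

Lemma xat_mod n (x : vec n) k1 k2 : k1 %% n = k2 %% n -> xat x k1 = xat x k2.
Proof. by rewrite /xat => ->. Qed.

Lemma xatE n (x : vec n) k (Hn : 0 < n) : xat x k = x (Ordinal (ltn_pmod k Hn)).
Proof.
apply/existsP/idP => [[i /andP[/eqP Hi xi]]|xk].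
  by have -> : Ordinal (ltn_pmod k Hn) = i by apply: val_inj; rewrite /= Hi.
by exists (Ordinal (ltn_pmod k Hn)); rewrite /= eqxx.
Qed.

Lemma xat_ord n (x : vec n) (i : 'I_n) : xat x i = x i.
Proof.
have Hn : 0 < n by case: i => i /=; case: n x => //.
rewrite (xatE _ _ Hn); congr (x _); apply: val_inj; rewrite /= modn_small //.
Qed.

Lemma xat_addn n (x : vec n) k : xat x (k + n) = xat x k.
Proof. by apply: xat_mod; rewrite modnDr. Qed.

Lemma xat_addmul n (x : vec n) k c : xat x (k + c * n) = xat x k.
Proof. by apply: xat_mod; rewrite addnC modnMDl. Qed.

Lemma test (a b : nat) : a < b -> a + 1 <= b.
Proof. lia. Qed.
Lemma chi_core (L : nat) (V W : nat -> bool) :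
  odd L -> (forall a, V (a + L) = V a) -> (forall a, W (a + L) = W a) ->
  (forall a, V a (+) W a = (V a.+1 && ~~ V a.+2) (+) (W a.+1 && ~~ W a.+2)) ->
  forall a, V a = W a.
Proof.
move=> oL VP WP rel a0.
have L0 : 0 < L by rewrite lt0n; apply/eqP => e; rewrite e in oL.
pose s a := V a (+) W a.
have sP : forall a c, s (a + c * L) = s a.
  move=> a c; elim: c => [|c IH]; first by rewrite mul0n addn0.
  by rewrite mulSn (addnC L) addnA /s VP WP -/(s _) IH.
have step0 : forall a, ~~ s a.+1 -> ~~ s a.+2 -> ~~ s a.
  move=> a; rewrite /s; have := rel a.
  by case: (V a); case: (W a); case: (V a.+1); case: (W a.+1);
     case: (V a.+2); case: (W a.+2).
have back : forall k a, ~~ s (a + k) -> ~~ s (a + k).+1 -> ~~ s a.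
  elim=> [|k IH] a; first by rewrite addn0.
  rewrite addnS => h1 h2; apply: IH => //.
  exact: step0.
have allz : forall a, ~~ s a -> ~~ s a.+1 -> forall b, ~~ s b.
  move=> a h1 h2 b.
  have e : b + (a + b * L - b) = a + b * L.
    have : b <= b * L by rewrite leq_pmulr.
    lia.
  apply: (back (a + b * L - b)); rewrite e ?sP //.
  by rewrite -addSn sP.
suff : ~~ s a0 by rewrite /s; case: (V a0); case: (W a0).
apply/negP => sa0.
have no00 : forall a, s a || s a.+1.
  move=> a; apply/negPn/negP; rewrite negb_or => /andP[h1 h2].
  by move: (allz a h1 h2 a0); rewrite sa0.
case: (boolP [forall i : 'I_L, s i]) => [/forallP alls|].
  have alls' : forall a, s a.
    move=> a; have := sP (a %% L) (a %/ L).
    by rewrite addnC -divn_eq => ->; apply: (alls (Ordinal (ltn_pmod a L0))).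
  have alt : forall a, V a.+2 = ~~ V a.+1.
    move=> a; move: (rel a) (alls' a) (alls' a.+1) (alls' a.+2); rewrite /s.
    by case: (V a); case: (W a); case: (V a.+1); case: (W a.+1);
       case: (V a.+2); case: (W a.+2).
  have alt2 : forall k, V k.+1 = V 1 (+) odd k.
    elim=> [|k IH]; first by rewrite addbF.
    by rewrite alt IH /= addbN.
  move: (VP 1); rewrite add1n alt2 oL.
  by case: (V 1).
rewrite negb_forall => /existsP [p hp].
have sp1 : s p.+1 by move: (no00 p); rewrite (negbTE hp).
have step2 : forall r, ~~ s r.+2 -> ~~ s r.
  move=> r h.
  have h1 : s r.+1 by move: (no00 r.+1); rewrite (negbTE h) orbF.
  have h3 : s r.+3 by move: (no00 r.+2); rewrite (negbTE h).
  move: (rel r) (rel r.+1) h h1 h3; rewrite /s.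
  by case: (V r); case: (W r); case: (V r.+1); case: (W r.+1);
     case: (V r.+2); case: (W r.+2); case: (V r.+3); case: (W r.+3).
have iter : forall k r, ~~ s (r + k.*2) -> ~~ s r.
  elim=> [|k IH] r; first by rewrite addn0.
  move=> h; apply: IH; apply: step2.
  by rewrite doubleS !addnS in h.
have eL : p.+1 + (L./2).*2 = p + L.
  have := odd_double_half L; rewrite oL; lia.
move: (iter (L./2) p.+1); rewrite eL.
have -> : s (p + L) = s p by have := sP p 1; rewrite mul1n.
by rewrite hp sp1 => /(_ isT).
Qed.

Definition piF (m t : nat) (u : vec m) : vec m :=
  [ffun k : 'I_m => (xat u k && xat u (k + t)) (+) true (+) xat u k (+) xat u (k + (m - t))].

Lemma piF_inj m t : 0 < m -> t < m -> odd (m %/ gcdn m t) -> injective (@piF m t).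
Proof.
move=> m0 tm oL u w E.
have Eq : forall k, xat u k (+) xat w k =
   (xat u (k + t) && ~~ xat u (k + t + t)) (+) (xat w (k + t) && ~~ xat w (k + t + t)).
  move=> k.
  have := congr1 (fun f : vec m => f (Ordinal (ltn_pmod (k + t) m0))) E.
  rewrite !ffunE /=.
  have e1 : forall x : vec m, xat x ((k + t) %% m) = xat x (k + t).
    by move=> x; apply: xat_mod; rewrite modn_mod.
  have e2 : forall x : vec m, xat x ((k + t) %% m + t) = xat x (k + t + t).
    by move=> x; apply: xat_mod; rewrite modnDml.
  have e3 : forall x : vec m, xat x ((k + t) %% m + (m - t)) = xat x k.
    move=> x; rewrite -(xat_addn x k); apply: xat_mod; rewrite modnDml.
    by congr (_ %% _); lia.
  rewrite !e1 !e2 !e3.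
  by case: (xat u k); case: (xat w k); case: (xat u (k + t)); case: (xat w (k + t));
     case: (xat u (k + t + t)); case: (xat w (k + t + t)).
apply/ffunP => j; rewrite -!xat_ord.
pose L := m %/ gcdn m t.
have Lt : L * t = (t %/ gcdn m t) * m.
  by rewrite /L divn_mulAC ?dvdn_gcdl // mulnC -divn_mulAC ?dvdn_gcdr.
have := @chi_core L (fun a => xat u (j + a * t)) (fun a => xat w (j + a * t)) oL.
move=> H; have := H _ _ _ 0; rewrite mul0n addn0; apply.
- by move=> a; rewrite /= mulnDl Lt addnA xat_addmul.
- by move=> a; rewrite /= mulnDl Lt addnA xat_addmul.
- move=> a /=; rewrite Eq.
  have -> : j + a * t + t = j + a.+1 * t by rewrite mulSnr addnA.
  by have -> : j + a.+1 * t + t = j + a.+2 * t by rewrite (mulSnr a.+1) addnA.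
Qed.

Definition Phi (m : nat) (p : vec m * vec m) : vec (m.*2) :=
  [ffun i : 'I_(m.*2) => xat p.2 i (+) ((m <= i) && xat p.1 i)].
Definition Psi (m : nat) (x : vec (m.*2)) : vec m * vec m :=
  ([ffun j : 'I_m => xat x j (+) xat x (j + m)], [ffun j : 'I_m => xat x j]).

Lemma xat_ffun m (F : nat -> bool) k (m0 : 0 < m) :
  xat [ffun j : 'I_m => F j] k = F (k %% m).
Proof. by rewrite (xatE _ _ m0) ffunE. Qed.

Lemma xat_Phi m (p : vec m * vec m) k : 0 < m ->
  xat (Phi p) k = xat p.2 k (+) ((m <= k %% m.*2) && xat p.1 k).
Proof.
move=> m0; have m20 : 0 < m.*2 by rewrite double_gt0.
rewrite (xatE _ _ m20) ffunE /=.
have dv : m %| m.*2 by rewrite -muln2 dvdn_mulr.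
by congr (_ (+) (_ && _)); apply: xat_mod; rewrite modn_dvdm.
Qed.

Lemma PsiK m : 0 < m -> cancel (@Phi m) (@Psi m).
Proof.
move=> m0 [u y]; rewrite /Psi; congr (_, _); apply/ffunP => j; rewrite ffunE.
- rewrite !xat_Phi //= !xat_addn.
  have j2 : j < m.*2 by rewrite -addnn ltn_addr.
  have jm2 : j + m < m.*2 by rewrite -addnn ltn_add2r.
  rewrite !modn_small // leq_addl.
  rewrite (leqNgt m j) ltn_ord /= xat_ord.
  by rewrite xat_ord; case: (y j); case: (u j).
- rewrite xat_Phi //= modn_small; last by rewrite -addnn ltn_addr.
  by rewrite (leqNgt m j) ltn_ord /= addbF xat_ord.
Qed.

Lemma PhiK m : 0 < m -> cancel (@Psi m) (@Phi m).
Proof.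
move=> m0 x; apply/ffunP => i; rewrite ffunE /= !xat_ffun //.
case: (leqP m i) => mi /=.
- have e : i %% m = i - m.
    by rewrite -{1}(subnK mi) modnDr modn_small // ltn_subLR // addnn.
  rewrite e (xat_ffun (fun k => xat x k (+) xat x (k + m))) // e subnK // !xat_ord.
  by case: (x i); case: (xat x (i - m)).
- by rewrite modn_small // xat_ord addbF.
Qed.

Lemma split2 m (F : nat -> bool) :
  \big[addb/false]_(i < m.*2) F i = \big[addb/false]_(i < m) (F i (+) F (i + m)).
Proof.
rewrite -(big_mkord xpredT F) -addnn (big_cat_nat _ (leq_addr m m)) //=.
rewrite (big_addn 0 _ m) addnK big_mkord big_split /=; congr (_ (+) _).
  by rewrite big_mkord.
Qed.

Lemma shift1 n (G : nat -> bool) :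
  (forall k, G (k + n) = G k) ->
  \big[addb/false]_(i < n) G (i + 1) = \big[addb/false]_(i < n) G i.
Proof.
move=> GP; case: n GP => [|n] GP; first by rewrite !big_ord0.
rewrite big_ord_recr big_ord_recl /= -(GP 0) add0n addn1 addbC; congr (_ (+) _).
by apply: eq_bigr => i _; rewrite /bump /= add1n addn1.
Qed.

Lemma shift n (G : nat -> bool) s :
  (forall k, G (k + n) = G k) ->
  \big[addb/false]_(i < n) G (i + s) = \big[addb/false]_(i < n) G i.
Proof.
move=> GP; elim: s => [|s IH]; first by apply: eq_bigr => i _; rewrite addn0.
rewrite -IH -(shift1 (G := fun k => G (k + s))); last by move=> k; rewrite addnAC GP.
by apply: eq_bigr => i _; rewrite addnAC addn1 addnS.
Qed.

Lemma dotbE n (x b : vec n) : dotb x b = \big[addb/false]_(i < n) (xat x i && xat b i).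
Proof. by apply: eq_bigr => i _; rewrite !xat_ord. Qed.

Section Key.
Variables (m t : nat) (gamma : anf m) (b : vec (m.*2)).
Hypotheses (m0 : 0 < m) (tm : t < m).

Definition aa (u : vec m) : vec m :=
  [ffun k : 'I_m => piF t u k (+) (xat b k (+) xat b (k + m))].
Definition HH (u : vec m) : bool :=
  (\big[addb/false]_(i < m) (((i + t < m) && xat u i && xat u (i + t))
       (+) (xat u i && xat b (i + m)))) (+) anf_eval gamma u.

Lemma xPhi_lo (p : vec m * vec m) k : k < m -> xat (Phi p) k = xat p.2 k.
Proof.
move=> km; rewrite xat_Phi // modn_small; last by rewrite -addnn ltn_addr.
by rewrite leqNgt km addbF.
Qed.

Lemma xPhi_hi (p : vec m * vec m) k : m <= k -> k < m.*2 ->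
  xat (Phi p) k = xat p.2 k (+) xat p.1 k.
Proof. by move=> mk k2; rewrite xat_Phi // modn_small // mk. Qed.

Lemma xPhi_mt (p : vec m * vec m) (i : nat) : i < m ->
  xat (Phi p) (i + m + t) = xat p.2 (i + t) (+) (~~ (m <= i + t) && xat p.1 (i + t)).
Proof.
move=> im; case: (leqP m (i + t)) => h /=.
- have e : i + m + t = (i + t - m) + m.*2 by rewrite -addnn; lia.
  rewrite e (@xat_mod _ _ _ (i + t - m)); last by rewrite modnDr.
  rewrite xPhi_lo; last by lia.
  rewrite addbF; apply: xat_mod.
  by rewrite -{2}(subnK h) modnDr.
- rewrite xPhi_hi; [|lia|rewrite -addnn; lia].
  by rewrite -addnA (addnC m) addnA !xat_addn.
Qed.

Lemma xPhi_t (p : vec m * vec m) (i : nat) : i < m ->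
  xat (Phi p) (i + t) = xat p.2 (i + t) (+) ((m <= i + t) && xat p.1 (i + t)).
Proof.
move=> im; case: (leqP m (i + t)) => h /=.
- by rewrite xPhi_hi //; rewrite -addnn; lia.
- by rewrite xPhi_lo // addbF.
Qed.

Lemma acL (a1 a2 g a3 a4 a5 : bool) : a1 (+) a2 (+) a3 (+) a4 (+) a5 = false ->
  a1 (+) a2 (+) g (+) a3 = a4 (+) (a5 (+) g).
Proof. by case: a1; case: a2; case: g; case: a3; case: a4; case: a5. Qed.

Lemma key (u y : vec m) :
  f_t t gamma (Phi (u, y)) (+) dotb (Phi (u, y)) b = dotb y (aa u) (+) HH u.
Proof.
set x := Phi (u, y).
have garg : [ffun j : 'I_m => xat x j (+) xat x (j + m)] = u.
  apply/ffunP => j; rewrite ffunE xPhi_lo // xPhi_hi; last first.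
  - by rewrite -addnn ltn_add2r.
  - by rewrite leq_addl.
  by rewrite /= !xat_addn !xat_ord; case: (y j); case: (u j).
rewrite /f_t garg (dotbE x) (dotbE y).
rewrite (split2 m (fun i => (xat x i && xat x (i + t) && xat x (i + m)) (+) (xat x i && xat x (i + t)))).
rewrite (split2 m (fun i => xat x i && xat b i)).
rewrite /HH; apply: acL; rewrite -!big_split /=.
pose G k := xat y k && xat u (k + (m - t)).
rewrite (eq_bigr (fun i : 'I_m => G (i + t) (+) G i)).
  rewrite big_split /= shift ?addbb // => k.
  by rewrite /G addnAC !xat_addn.
move=> i _.
have im := ltn_ord i.
have h1 : xat x (i + m) = xat y i (+) xat u i.
  rewrite xPhi_hi ?leq_addl //; last by rewrite -addnn ltn_add2r.
  by rewrite /= !xat_addn.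
have h0 : xat x i = xat y i by rewrite xPhi_lo.
rewrite /G xPhi_mt // xPhi_t // -addnA addnn xat_addn h1 h0 /=.
rewrite (xat_ord (aa u)) !ffunE !xat_ord.
rewrite (_ : i + t + (m - t) = i + m); last by lia.
rewrite xat_addn xat_ord ltnNge.
case: (y i); case: (u i); case: (xat y (i + t)); case: (xat u (i + t));
  case: (m <= i + t); case: (xat b i); case: (xat b (i + m));
  by case: (xat u (i + (m - t))).
Qed.
End Key.

Definition subv n (w u : vec n) : bool := [forall i, w i ==> u i].

Lemma subv_trans n (a b c : vec n) : subv a b -> subv b c -> subv a c.
Proof.
move=> /forallP h1 /forallP h2; apply/forallP => i; apply/implyP => ai.
by apply: (implyP (h2 i)); apply: (implyP (h1 i)).
Qed.

Lemma subv_anti n (a b : vec n) : subv a b -> subv b a -> a = b.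
Proof.
move=> /forallP h1 /forallP h2; apply/ffunP => i.
by move: (h1 i) (h2 i); case: (a i); case: (b i).
Qed.

Lemma xor_exists (I : finType) (P : pred I) (F : I -> bool) :
  \big[addb/false]_(i | P i) F i -> exists i, P i && F i.
Proof.
move=> h; case: (pickP (fun i => P i && F i)) => [i hi|none]; first by exists i.
by move: h; rewrite big1 // => i Pi; move: (none i); rewrite Pi.
Qed.

Lemma interval_parity n (v u : vec n) :
  \big[addb/false]_(w | subv v w && subv w u) true = (v == u).
Proof.
case: (boolP (subv v u)) => vu; last first.
  rewrite big1; last by move=> w /andP[h1 h2]; move: vu; rewrite (subv_trans h1 h2).
  by case: eqP => // e; move: vu; rewrite e; move/negP; case; apply/forallP => i; apply/implyP.
case: (eqVneq v u) => [->|nvu].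
  rewrite (bigD1 u) /=; last by rewrite andbb; apply/forallP => i; apply/implyP.
  rewrite big1 // => w /andP[/andP[h1 h2] nw].
  by move: nw; rewrite (subv_anti h2 h1) eqxx.
have [i /andP[ui nvi]] : exists i, u i && ~~ v i.
  apply/existsP; apply: contraR nvu; rewrite negb_exists => /forallP h.
  apply/eqP/subv_anti => //; apply/forallP => j; move: (h j).
  by case: (u j); case: (v j).
pose sg (w : vec n) : vec n := [ffun j => w j (+) (j == i)].
have sgK : involutive sg by move=> y; apply/ffunP => j; rewrite !ffunE -addbA addbb addbF.
have sgsub : forall a w : vec n, a i = false -> subv a (sg w) = subv a w.
  move=> a w ai; apply/forallP/forallP => h j; move: (h j); rewrite ?ffunE;
  case: (eqVneq j i) => [->|nji]; rewrite ?ai // addbF //.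
have subsg : forall w : vec n, subv (sg w) u = subv w u.
  move=> w; apply/forallP/forallP => h j; move: (h j); rewrite ?ffunE;
  case: (eqVneq j i) => [->|nji]; rewrite ?ui ?implybT // addbF //.
rewrite (bigID (fun w : vec n => w i)) /=.
rewrite [X in X (+) _](reindex_inj (inv_inj sgK)) /=.
rewrite (eq_bigl (fun w : vec n => (subv v w && subv w u) && ~~ w i)); first by rewrite addbb.
move=> w /=; rewrite sgsub ?(negbTE nvi) // subsg ffunE eqxx.
by case: (w i); rewrite ?andbF ?andbT.
Qed.

Definition moeb n (f : vec n -> bool) (u : vec n) : bool :=
  \big[addb/false]_(w | subv w u) f w.

Lemma anf_evalE n (c : anf n) x : anf_eval c x = \big[addb/false]_u (c u && subv u x).
Proof. by []. Qed.

Lemma moeb_anf n (c : anf n) u : moeb (anf_eval c) u = c u.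
Proof.
rewrite /moeb /anf_eval.
rewrite (exchange_big_dep xpredT) //=.
rewrite (eq_bigr (fun v => c v && (v == u))).
  by rewrite (bigD1 u) //= eqxx andbT big1 ?addbF // => v /negbTE ->; rewrite andbF.
move=> v _; rewrite -big_distrr /=; congr (_ && _).
rewrite -interval_parity big_mkcond [RHS]big_mkcond /=.
apply: eq_bigr => w _; rewrite /subv.
by case: [forall i, w i ==> u i]; case: [forall i, v i ==> w i].
Qed.

Definition repr_le n (f : vec n -> bool) (k : nat) :=
  exists c : anf n, (forall x, anf_eval c x = f x) /\ (forall u, c u -> wt u <= k).

Lemma repr_ext n (f g : vec n -> bool) k : (forall x, f x = g x) -> repr_le f k -> repr_le g k.
Proof. by move=> fg [c [h1 h2]]; exists c; split => // x; rewrite h1. Qed.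

Lemma repr_mono n (f : vec n -> bool) k k' : k <= k' -> repr_le f k -> repr_le f k'.
Proof. by move=> kk [c [h1 h2]]; exists c; split => // u /h2 /leq_trans; apply. Qed.

Lemma repr_false n k : repr_le (fun _ : vec n => false) k.
Proof. by exists [ffun => false]; split => [x|u]; rewrite ?ffunE //; rewrite /anf_eval big1 // => u _; rewrite ffunE. Qed.

Lemma repr_xor n (f g : vec n -> bool) k : repr_le f k -> repr_le g k ->
  repr_le (fun x => f x (+) g x) k.
Proof.
move=> [c [h1 h2]] [c' [h1' h2']]; exists [ffun u => c u (+) c' u]; split.
  move=> x; rewrite -h1 -h1' /anf_eval -big_split /=.
  by apply: eq_bigr => u _; rewrite ffunE andb_addl.
by move=> u; rewrite ffunE; case: (c u) (h2 u); case: (c' u) (h2' u) => // _ ->.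
Qed.

Lemma repr_bigxor n (I : Type) (r : seq I) (P : pred I) (F : I -> vec n -> bool) k :
  (forall i, P i -> repr_le (F i) k) ->
  repr_le (fun x => \big[addb/false]_(i <- r | P i) F i x) k.
Proof.
move=> h; elim: r => [|i r IH].
  by apply: repr_ext (repr_false n k) => x; rewrite big_nil.
case: (boolP (P i)) => Pi.
  apply: repr_ext (repr_xor (h i Pi) IH) => x; by rewrite big_cons Pi.
by apply: repr_ext IH => x; rewrite big_cons (negbTE Pi).
Qed.

Lemma wt_union n (u v : vec n) : wt [ffun i => u i || v i] <= wt u + wt v.
Proof.
rewrite /wt; have -> : [set i | [ffun i => u i || v i] i] = [set i | u i] :|: [set i | v i].
  by apply/setP => i; rewrite !inE ffunE.
by rewrite cardsU leq_subr.
Qed.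

Lemma subv_union n (u v x : vec n) : subv [ffun i => u i || v i] x = subv u x && subv v x.
Proof.
apply/forallP/andP => [h|[/forallP h1 /forallP h2]].
  by split; apply/forallP => i; move: (h i); rewrite ffunE; case: (u i); case: (v i).
by move=> i; rewrite ffunE; move: (h1 i) (h2 i); case: (u i); case: (v i).
Qed.

Lemma repr_and n (f g : vec n -> bool) k1 k2 : repr_le f k1 -> repr_le g k2 ->
  repr_le (fun x => f x && g x) (k1 + k2).
Proof.
move=> [c [h1 h2]] [c' [h1' h2']].
pose U (p : vec n * vec n) : vec n := [ffun i => p.1 i || p.2 i].
exists [ffun w => \big[addb/false]_(p | U p == w) (c p.1 && c' p.2)]; split.
  move=> x; rewrite -h1 -h1' /anf_eval; symmetry; rewrite big_distrl /=.
  rewrite (eq_bigr (fun u => \big[addb/false]_v ((c u && subv u x) && (c' v && subv v x)))); last first.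
    by move=> u _; rewrite big_distrr.
  rewrite (pair_bigA _ (fun u v => (c u && subv u x) && (c' v && subv v x))) /=.
  rewrite (partition_big U xpredT) //=.
  apply: eq_bigr => w _; rewrite ffunE big_distrl /=.
  apply: eq_bigr => p /eqP <-; rewrite [X in _ = _ && X]subv_union.
  by case: (c p.1); case: (c' p.2); case: (subv p.1 x); case: (subv p.2 x).
move=> w; rewrite ffunE => /xor_exists [p /andP[/eqP <- /andP[cp cp']]].
apply: leq_trans (wt_union _ _) _; apply: leq_add; [exact: h2 | exact: h2'].
Qed.

Lemma repr_true n : repr_le (fun _ : vec n => true) 0.
Proof.
exists [ffun u => u == [ffun => false]]; split => [x|u].
  rewrite /anf_eval (bigD1 [ffun => false]) //= ffunE eqxx /=.
  rewrite big1; first by rewrite addbF; apply/forallP => i; rewrite ffunE.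
  by move=> u /negbTE nu; rewrite ffunE nu.
rewrite ffunE => /eqP ->; rewrite /wt leqn0 cards_eq0; apply/eqP/setP => i.
by rewrite !inE ffunE.
Qed.

Lemma repr_var n (i : 'I_n) : repr_le (fun x : vec n => x i) 1.
Proof.
pose e : vec n := [ffun j => j == i].
exists [ffun u => u == e]; split => [x|u].
  rewrite /anf_eval (bigD1 e) //= ffunE eqxx /=.
  rewrite big1; last by move=> u /negbTE nu; rewrite ffunE nu.
  rewrite addbF; apply/forallP/idP => [h|xi j]; first by move: (h i); rewrite ffunE eqxx.
  by rewrite ffunE; apply/implyP => /eqP ->.
rewrite ffunE => /eqP ->; rewrite /wt.
have -> : [set j | e j] = [set i] by apply/setP => j; rewrite !inE ffunE.
by rewrite cards1.
Qed.

Lemma repr_xat n (k : nat) : repr_le (fun x : vec n => xat x k) 1.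
Proof.
case: n => [|n].
  apply: repr_ext (repr_false 0 1) => x; rewrite /xat.
  by apply/esym/existsP => [[[i hi]]].
apply: repr_ext (repr_var (Ordinal (ltn_pmod k (ltn0Sn n)))) => x; by rewrite (xatE _ _ (ltn0Sn n)).
Qed.

Lemma per_mod (F : nat -> bool) m : (forall k, F (k + m) = F k) -> forall k, F (k %% m) = F k.
Proof.
move=> P k; rewrite {2}(divn_eq k m); elim: (k %/ m) => [|c IH]; first by rewrite mul0n add0n.
by rewrite mulSnr addnAC P.
Qed.

Lemma xat_rot n (x : vec n) k : 0 < n -> xat (Defs.rot x) k = xat x (k + 1).
Proof.
move=> n0; rewrite (xatE _ _ n0) ffunE /=; apply: xat_mod; by rewrite modnDml.
Qed.

Lemma rot_ft m t (gamma : anf m) : 0 < m ->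
  rotation_symmetric (anf_eval gamma) -> rotation_symmetric (f_t t gamma).
Proof.
move=> m0 rg x.
have m20 : 0 < m.*2 by rewrite double_gt0.
rewrite /f_t.
have -> : [ffun j : 'I_m => xat (Defs.rot x) j (+) xat (Defs.rot x) (j + m)] =
          Defs.rot [ffun j : 'I_m => xat x j (+) xat x (j + m)].
  apply/ffunP => j; rewrite !ffunE !xat_rot //.
  rewrite (xat_ffun (fun k => xat x k (+) xat x (k + m))) //.
  rewrite (per_mod (F := fun k => xat x k (+) xat x (k + m))); first by rewrite (addnAC j m 1).
  move=> k /=; rewrite -addnA addnn xat_addn addbC.
  by congr (_ (+) _); rewrite addnAC.
rewrite rg; congr (_ (+) _ (+) _).
- pose F k := (xat x k && xat x (k + t) && xat x (k + m)) (+) (xat x k && xat x (k + t)).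
  rewrite (eq_bigr (fun i : 'I_(m.*2) => F (i + 1))); last first.
    by move=> i _; rewrite !xat_rot // /F (addnAC i t) (addnAC i m).
  apply: (shift (G := F)) => k.
  by rewrite /F (addnAC k _ t) (addnAC k _ m) !xat_addn.
- pose F k := xat x k && xat x (k + m).
  rewrite (eq_bigr (fun i : 'I_m => F (i + 1))); last first.
    by move=> i _; rewrite !xat_rot // /F (addnAC i m).
  apply: (shift (G := F)) => k.
  by rewrite /F -addnA addnn xat_addn andbC.
Qed.

Lemma repr_bigand n (I : Type) (r : seq I) (F : I -> vec n -> bool) (k : I -> nat) :
  (forall i, repr_le (F i) (k i)) ->
  repr_le (fun x => \big[andb/true]_(i <- r) F i x) (\sum_(i <- r) k i).
Proof.
move=> h; elim: r => [|i r IH].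
  by rewrite big_nil; apply: repr_ext (repr_true n) => x; rewrite big_nil.
rewrite big_cons; apply: repr_ext (repr_and (h i) IH) => x; by rewrite big_cons.
Qed.

Lemma repr_gammaL m (gamma : anf m) :
  repr_le (fun x : vec (m.*2) => anf_eval gamma [ffun j : 'I_m => xat x j (+) xat x (j + m)])
          (anf_deg gamma).
Proof.
rewrite /anf_eval; apply: repr_bigxor => v _.
case: (boolP (gamma v)) => gv; last first.
  by apply: repr_ext (repr_false _ _) => x.
have wv : wt v <= anf_deg gamma by rewrite /anf_deg; apply: leq_bigmax_cond.
apply: repr_mono wv _.
have -> : wt v = \sum_(j < m) (v j : nat).
  rewrite /wt -sum1_card big_mkcond /=; apply: eq_bigr => j _.
  by rewrite inE; case: (v j).
apply: repr_ext (repr_bigand _ (F := fun j x => v j ==> (xat x j (+) xat x (j + m))) _) => [x|j].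
  by rewrite /= -big_andE [RHS]big_mkcond; apply: eq_bigr => j _; rewrite ffunE; case: (v j).
case: (v j) => /=.
  exact: repr_xor (repr_xat _ _) (repr_xat _ _).
exact: repr_true.
Qed.

Lemma repr_ft m t (gamma : anf m) d : anf_deg gamma = d -> 3 <= d ->
  repr_le (f_t t gamma) d.
Proof.
move=> dg d3; rewrite /f_t.
apply: repr_xor; [apply: repr_xor|]; last by rewrite -dg; apply: repr_gammaL.
- apply: repr_bigxor => i _; apply: repr_xor.
    by apply: repr_mono d3 _; apply: repr_and (repr_and (repr_xat _ _) (repr_xat _ _)) (repr_xat _ _).
  by apply: repr_mono (leq_trans _ d3) _; last apply: repr_and (repr_xat _ _) (repr_xat _ _).
- apply: repr_bigxor => i _.
  by apply: repr_mono (leq_trans _ d3) _; last apply: repr_and (repr_xat _ _) (repr_xat _ _).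
Qed.

Definition Qf m t (w : vec m) : bool :=
  \big[addb/false]_(i < m) ((i + t < m) && xat w i && xat w (i + t)).

Lemma ft_PhiE m t (gamma : anf m) (w : vec m) : 0 < m -> t < m ->
  f_t t gamma (Phi (w, w)) = Qf t w (+) anf_eval gamma w.
Proof.
move=> m0 tm; set x := Phi (w, w).
have h1 : forall i, i < m -> xat x (i + m) = false.
  move=> i im; rewrite (xPhi_hi m0) ?leq_addl //; last by rewrite -addnn ltn_add2r.
  by rewrite /= xat_addn addbb.
have garg : [ffun j : 'I_m => xat x j (+) xat x (j + m)] = w.
  by apply/ffunP => j; rewrite ffunE h1 // addbF (xPhi_lo m0) //= xat_ord.
rewrite /f_t garg.
rewrite (split2 m (fun i => (xat x i && xat x (i + t) && xat x (i + m)) (+) (xat x i && xat x (i + t)))).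
rewrite [X in _ (+) X (+) _]big1 ?addbF; last by move=> i _; rewrite h1 ?andbF.
congr (_ (+) _); rewrite /Qf.
apply: eq_bigr => i _; have im := ltn_ord i.
rewrite h1 // (xPhi_mt m0 tm) // (xPhi_t m0 tm) // (xPhi_lo m0) //= ltnNge.
by case: (m <= i + t); case: (xat w i); case: (xat w (i + t)).
Qed.

Lemma PhiD m (a : vec m) (i : 'I_(m.*2)) : Phi (a, a) i = (i < m) && xat a i.
Proof. by rewrite ffunE /=; case: (leqP m i) => /= h; rewrite ?addbb ?addbF. Qed.

Lemma subv_PhiD m (a b : vec m) : subv (Phi (a, a)) (Phi (b, b)) = subv a b.
Proof.
have mm : m <= m.*2 by rewrite -addnn leq_addr.
apply/forallP/forallP => h j.
  move: (h (widen_ord mm j)); rewrite !PhiD /= ltn_ord !xat_ord //.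
rewrite !PhiD; case: (ltnP j m) => //= jm.
  by move: (h (Ordinal jm)); rewrite -(xat_ord a) -(xat_ord b) => H; exact: H.
Qed.

Lemma wt_PhiD m (a : vec m) : wt (Phi (a, a)) = wt a.
Proof.
have mm : m <= m.*2 by rewrite -addnn leq_addr.
rewrite /wt; have -> : [set i | Phi (a, a) i] = (widen_ord mm) @: [set j | a j].
  apply/setP => i; rewrite inE PhiD; apply/idP/imsetP.
    move=> /andP[im ai]; exists (Ordinal im); first by rewrite inE -xat_ord.
    by apply: val_inj.
  by move=> [j]; rewrite inE => aj ->; rewrite /= ltn_ord xat_ord.
by rewrite card_imset //; by move=> x y /(congr1 val) /= e; apply: val_inj.
Qed.

Lemma repr_Qf m t : repr_le (@Qf m t) 2.
Proof.
apply: repr_bigxor => i _; case: (i + t < m) => /=.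
  exact: repr_and (repr_xat _ _) (repr_xat _ _).
exact: repr_false.
Qed.

Lemma deg_ft m t (gamma : anf m) d : 0 < m -> t < m -> anf_deg gamma = d -> 3 <= d ->
  has_alg_degree (f_t t gamma) d.
Proof.
move=> m0 tm dg d3.
have [c [hc hw]] := repr_ft t dg d3.
exists c; split => //.
have [v0 gv0 wv0] : exists2 v0, gamma v0 & wt v0 = d.
  case: (pickP (fun u => gamma u)) => [v gv | none]; last first.
    by move: d3; rewrite -dg /anf_deg big_pred0.
  have : 0 < #|[pred u | gamma u]| by apply/card_gt0P; exists v.
  move/(eq_bigmax_cond (@wt m)) => [v1 gv1 e]; exists v1 => //.
  by rewrite -e -dg /anf_deg; apply: eq_bigl.
apply/eqP; rewrite eqn_leq; apply/andP; split.
  by apply/bigmax_leqP => u cu; exact: hw.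
have cu0 : c (Phi (v0, v0)).
  rewrite -moeb_anf /moeb.
  rewrite (eq_bigr (fun w => f_t t gamma w)); last by move=> w _; rewrite hc.
  rewrite (reindex_onto (fun w' => Phi (w', w')) (fun w => [ffun j : 'I_m => xat w j])) /=; last first.
    move=> w /forallP h; apply/ffunP => i; rewrite PhiD.
    case: (ltnP i m) => im /=.
      by rewrite (xat_ffun (fun k => xat w k)) // modn_small // xat_ord.
    by move: (h i); rewrite PhiD ltnNge im /=; case: (w i).
  rewrite (eq_bigl (fun w => subv w v0)); last first.
    move=> a; rewrite subv_PhiD.
    have -> : [ffun j : 'I_m => xat (Phi (a, a)) j] = a.
      by apply/ffunP => j; rewrite ffunE (xPhi_lo m0) //= xat_ord.
    by rewrite eqxx andbT.
  rewrite (eq_bigr (fun w => Qf t w (+) anf_eval gamma w)); last by move=> w _; rewrite ft_PhiE.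
  rewrite big_split /= -/(moeb (anf_eval gamma) v0) moeb_anf gv0 -/(moeb (Qf t) v0).
  have [cq [hq wq]] := repr_Qf m t.
  have -> : moeb (Qf t) v0 = moeb (anf_eval cq) v0 by apply: eq_bigr => w _; rewrite hq.
  rewrite moeb_anf; case: (boolP (cq v0)) => // /wq; rewrite wv0 => h.
  by move: (leq_trans d3 h).
by rewrite -wv0 -(wt_PhiD v0); apply: leq_bigmax_cond.
Qed.

Section BentSec.
Local Open Scope ring_scope.

Lemma charsum m (a : vec m) :
  \sum_(y : vec m) ((-1) ^+ dotb y a : int) =
  if a == [ffun => false] then (2 ^ m)%:R else 0.
Proof.
case: eqP => [->|/eqP na].
  rewrite (eq_bigr (fun _ => 1)); last first.
    by move=> y _; rewrite /dotb big1 // => i _; rewrite ffunE andbF.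
  by rewrite sumr_const card_ffun card_bool card_ord.
have [i ai] : exists i, a i.
  apply/existsP; apply: contraR na; rewrite negb_exists => /forallP h.
  by apply/eqP/ffunP => j; rewrite ffunE; apply/negbTE.
pose sg (y : vec m) : vec m := [ffun j => y j (+) (j == i)].
have sgK : involutive sg by move=> y; apply/ffunP => j; rewrite !ffunE -addbA addbb addbF.
have dsg : forall y, dotb (sg y) a = ~~ dotb y a.
  move=> y; rewrite /dotb (bigD1 i) //= [in RHS](bigD1 i) //= !ffunE eqxx ai.
  rewrite (eq_bigr (fun j => y j && a j)); last first.
    by move=> j /negbTE hj; rewrite ffunE hj addbF.
  by case: (y i); case: (\big[addb/false]_(i0 < m | i0 != i) (y i0 && a i0)).
set S := (\sum_(y : vec m) ((-1) ^+ dotb y a : int)).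
have : S = - S.
  rewrite {1}/S (reindex_inj (inv_inj sgK)) /S -sumrN.
  by apply: eq_bigr => y _; rewrite dsg; case: (dotb y a); rewrite ?expr0 ?expr1 ?opprK.
lia.
Qed.

Lemma bent_ft m t (gamma : anf m) :
  (2 <= m)%N -> (1 <= t <= m - 1)%N -> odd (m %/ gcdn m t) -> bent (f_t t gamma).
Proof.
move=> m2 /andP[t1 tm1] oL b.
have m0 : (0 < m)%N by lia.
have tm : (t < m)%N by lia.
pose G (u y : vec m) : int := (-1) ^+ HH t gamma b u * (-1) ^+ dotb y (aa t b u).
rewrite /walsh (reindex (@Phi m)); last first.
  by apply: onW_bij; exists (@Psi m); [apply: PsiK | apply: PhiK].
rewrite (eq_bigr (fun p => G p.1 p.2)); last first.
  by move=> [u y] _ /=; rewrite (key gamma b m0 tm) signr_addb mulrC.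
rewrite -[X in X = _ \/ _]/(\sum_(p : vec m * vec m) G p.1 p.2).
rewrite -[X in _ \/ X = _]/(\sum_(p : vec m * vec m) G p.1 p.2).
rewrite -(pair_bigA _ G) /G.
rewrite (eq_bigr (fun u => (-1) ^+ HH t gamma b u *
     (if aa t b u == [ffun => false] then (2 ^ m)%:R else 0))); last first.
  by move=> u _; rewrite -mulr_sumr charsum.
pose bb : vec m := [ffun k : 'I_m => xat b k (+) xat b (k + m)].
have aaE : forall u, (aa t b u == [ffun => false]) = (piF t u == bb).
  move=> u; apply/eqP/eqP => [h|h]; apply/ffunP => k.
    move: (congr1 (fun f : vec m => f k) h); rewrite /aa !ffunE.
    by case: (_ (+) xat u (k + (m - t))); case: (xat b k (+) xat b (k + m)).
  by rewrite /aa ffunE h /bb !ffunE addbb.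
have pinj := piF_inj m0 tm oL.
have [u0 e0] : exists u0, piF t u0 = bb.
  by have /codomP [u0 ->] := injF_onto pinj bb; exists u0.
rewrite (bigD1 u0) //= big1 ?addr0; last first.
  move=> u hu; rewrite aaE.
  case: eqP => [e|_]; last by rewrite mulr0.
  by move: hu; rewrite -e0 in e; rewrite (pinj _ _ e) eqxx.
rewrite aaE e0 eqxx doubleK natz.
by case: (HH t gamma b u0); [right; rewrite expr1 mulN1r | left; rewrite expr0 mul1r].
Qed.

End BentSec.

Theorem theorem2 (m t : nat) (gamma : anf m) :
  2 <= m -> 1 <= t <= m - 1 -> odd (m %/ gcdn m t) ->
  bent (f_t t gamma) /\
  (forall d : nat,
     rotation_symmetric (anf_eval gamma) -> anf_deg gamma = d -> 3 <= d ->
     rotation_symmetric (f_t t gamma) /\ has_alg_degree (f_t t gamma) d).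
Proof.
move=> m2 ht oL; split; first exact: bent_ft.
move=> d rg dg d3.
have m0 : 0 < m by lia.
have tm : t < m by move/andP: ht => [h1 h2]; lia.
split; [exact: rot_ft | exact: deg_ft].
Qed.
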